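(* Let $\{\tilde\alpha,\tilde\beta\}$ be a dual timelike - spacelike Mannheim pair in $ID_1^3$, with $\tilde\beta(s^* )=\tilde\alpha(s)+\lambda B(s)$ where $\lambda$ is a nonzero dual constant. If $\tau$ is the dual torsion of $\tilde\alpha$ and $P$, $Q$ are the dual curvature and dual torsion of $\tilde\beta$, then $$\tau=-\frac{P}{\lambda Q}.$$
   Context: Dual numbers: $ID=\{a+\varepsilon a^*: a,a^*\in\mathbb R\}$ with $\varepsilon^2=0$; differentiable functions extend by $f(a+\varepsilon a^* )=f(a)+\varepsilon a^* f'(a)$. $ID_1^3$ is $ID^3$ with dual Lorentzian inner product $\langle \vec A,\vec B\rangle=\langle\vec a,\vec b\rangle+\varepsilon(\langle\vec a,\vec b^*\rangle+\langle\vec a^*,\vec b\rangle)$, $\langle\vec a,\vec b\rangle=-a_1b_1+a_2b_2+a_3b_3$; dual spacelike/timelike vectors have $\langle A,A\rangle>0$ / $<0$. $\tilde\alpha$ is a dual timelike curve with dual arc length $s$ and Frenet frame $\{T,N,B\}$ ($T$ timelike, $N,B$ spacelike unit, mutually orthogonal): $T'=\kappa N$, $N'=\kappa T+\tau B$, $B'=-\tau N$. $\tilde\beta$ is a dual spacelike curve with dual timelike binormal, arc length $s^*$, frame $\{V_1,V_2,V_3\}$ ($V_1,V_2$ spacelike unit, $V_3$ timelike unit): $V_1'=PV_2$, $V_2'=-PV_1+QV_3$, $V_3'=QV_2$. A dual timelike - spacelike Mannheim pair means that under a correspondence $s\mapsto s^*$ the dual binormal line of $\tilde\alpha$ coincides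 with the dual principal normal line of $\tilde\beta$ at corresponding points. *)

(* Defs.v *)
From Stdlib Require Import Reals.
Open Scope R_scope.

(** * Dual numbers  a + eps a*,  eps^2 = 0 *)
Record dual := mkD { dre : R ; ddu : R }.

Definition dadd (x y : dual) : dual := mkD (dre x + dre y) (ddu x + ddu y).
Definition dopp (x : dual) : dual := mkD (- dre x) (- ddu x).
Definition dmul (x y : dual) : dual :=
  mkD (dre x * dre y) (dre x * ddu y + ddu x * dre y).
(* inverse of a dual number with nonzero real part: 1/(a + eps a1) = 1/a - eps a1/a^2
   (total function; only meaningful when dre x <> 0) *)
Definition dinv (x : dual) : dual := mkD (/ dre x) (- ddu x / (dre x * dre x)).
Definition ddiv (x y : dual) : dual := dmul x (dinv y).
Definition dzero : dual := mkD 0 0.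
Definition done : dual := mkD 1 0.

Record dvec := mkV { c1 : dual ; c2 : dual ; c3 : dual }.

Definition vadd (X Y : dvec) : dvec := mkV (dadd (c1 X) (c1 Y)) (dadd (c2 X) (c2 Y)) (dadd (c3 X) (c3 Y)).
Definition vscale (k : dual) (X : dvec) : dvec := mkV (dmul k (c1 X)) (dmul k (c2 X)) (dmul k (c3 X)).

(** dual Lorentzian inner product  <A,B> = -A1 B1 + A2 B2 + A3 B3  (dual arithmetic);
    its real part is <a,b> and its dual part is <a,b*> + <a*,b>. *)
Definition linner (X Y : dvec) : dual :=
  dadd (dopp (dmul (c1 X) (c1 Y))) (dadd (dmul (c2 X) (c2 Y)) (dmul (c3 X) (c3 Y))).

Definition ddet (X Y Z : dvec) : dual :=
  dadd (dmul (c1 X) (dadd (dmul (c2 Y) (c3 Z)) (dopp (dmul (c3 Y) (c2 Z)))))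
  (dadd (dopp (dmul (c2 X) (dadd (dmul (c1 Y) (c3 Z)) (dopp (dmul (c3 Y) (c1 Z))))))
        (dmul (c3 X) (dadd (dmul (c1 Y) (c2 Z)) (dopp (dmul (c2 Y) (c1 Z)))))).

Definition dual_deriv_at (f : R -> dual) (t : R) (y : dual) : Prop :=
  derivable_pt_lim (fun u => dre (f u)) t (dre y) /\
  derivable_pt_lim (fun u => ddu (f u)) t (ddu y).

Definition vec_deriv_at (X : R -> dvec) (t : R) (Y : dvec) : Prop :=
  dual_deriv_at (fun u => c1 (X u)) t (c1 Y) /\
  dual_deriv_at (fun u => c2 (X u)) t (c2 Y) /\
  dual_deriv_at (fun u => c3 (X u)) t (c3 Y).

(** The curve is given with an arbitrary real parameter t on (a,b); v t = ds/dt is the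
    derivative of the dual arc length s (dual number with positive real part), so that
    d/ds = (1/v) d/dt.  The Frenet equations T' = kappa N, N' = kappa T + tau B,
    B' = - tau N (' = d/ds) thus read d/dt T = v kappa N, etc. *)
Definition timelike_frenet (alpha : R -> dvec) (a b : R)
  (v kappa tau : R -> dual) (T N B : R -> dvec) : Prop :=
  forall t, a < t < b ->
    0 < dre (v t) /\
    vec_deriv_at alpha t (vscale (v t) (T t)) /\
    vec_deriv_at T t (vscale (dmul (v t) (kappa t)) (N t)) /\
    vec_deriv_at N t (vscale (v t) (vadd (vscale (kappa t) (T t)) (vscale (tau t) (B t)))) /\
    vec_deriv_at B t (vscale (dopp (dmul (v t) (tau t))) (N t)) /\
    linner (T t) (T t) = dopp done /\
    linner (N t) (N t) = done /\
    linner (B t) (B t) = done /\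
    linner (T t) (N t) = dzero /\
    linner (T t) (B t) = dzero /\
    linner (N t) (B t) = dzero /\
    ddet (T t) (N t) (B t) = done.

(** * Dual spacelike curve with dual timelike binormal, positively oriented frame
    {V1,V2,V3} (V1, V2 spacelike, V3 timelike); w t = ds*/dt; Frenet equations
    V1' = P V2, V2' = -P V1 + Q V3, V3' = Q V2 with ' = d/ds*. *)
Definition spacelike_tb_frenet (beta : R -> dvec) (a b : R)
  (w P Q : R -> dual) (V1 V2 V3 : R -> dvec) : Prop :=
  forall t, a < t < b ->
    0 < dre (w t) /\
    vec_deriv_at beta t (vscale (w t) (V1 t)) /\
    vec_deriv_at V1 t (vscale (dmul (w t) (P t)) (V2 t)) /\
    vec_deriv_at V2 t (vscale (w t) (vadd (vscale (dopp (P t)) (V1 t)) (vscale (Q t) (V3 t)))) /\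
    vec_deriv_at V3 t (vscale (dmul (w t) (Q t)) (V2 t)) /\
    linner (V1 t) (V1 t) = done /\
    linner (V2 t) (V2 t) = done /\
    linner (V3 t) (V3 t) = dopp done /\
    linner (V1 t) (V2 t) = dzero /\
    linner (V1 t) (V3 t) = dzero /\
    linner (V2 t) (V3 t) = dzero /\
    ddet (V1 t) (V2 t) (V3 t) = done.

(* Main.v *)
Require Import Defs.
From Stdlib Require Import Reals Lra Psatz.
Open Scope R_scope.

Lemma dual_eq (x y : dual) : dre x = dre y -> ddu x = ddu y -> x = y.
Proof. destruct x, y; simpl; intros; subst; reflexivity. Qed.

Definition dsub (x y : dual) := dadd x (dopp y).

Lemma dual_ring : ring_theory dzero done dadd dmul dsub dopp (@eq dual).
Proof.
  constructor; intros; apply dual_eq; unfold dadd, dmul, dopp, dsub, dzero, done;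
  simpl; ring.
Qed.
Add Ring dualR : dual_ring.

Lemma dcancel (u x : dual) : dre u <> 0 -> dmul u x = dzero -> x = dzero.
Proof.
  destruct u as [u1 u2], x as [x1 x2]; unfold dmul, dzero; simpl; intros H E.
  injection E; intros E2 E1.
  assert (x1 = 0). { destruct (Rmult_integral _ _ E1); [contradiction|auto]. }
  subst. apply dual_eq; simpl; auto.
  rewrite Rmult_0_r, Rplus_0_r in E2.
  destruct (Rmult_integral _ _ E2); [contradiction|auto].
Qed.

Lemma dcancel2 (u x y : dual) : dre u <> 0 -> dmul u x = dmul u y -> x = y.
Proof.
  intros H E. assert (dsub x y = dzero).
  { apply (dcancel u); auto. transitivity (dsub (dmul u x) (dmul u y)); [ring|].
    rewrite E; ring. }
  transitivity (dadd (dsub x y) y); [ring|]. rewrite H0; ring.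
Qed.

Lemma dre_mul x y : dre (dmul x y) = dre x * dre y.
Proof. reflexivity. Qed.

Lemma runiq (f g : R -> R) a b t l1 l2 : a < t < b ->
  (forall z, a < z < b -> f z = g z) ->
  derivable_pt_lim f t l1 -> derivable_pt_lim g t l2 -> l1 = l2.
Proof.
  intros Ht E D1 D2. apply (uniqueness_limite g t); auto.
  exact (derivable_pt_lim_locally_ext f g t a b l1 Ht E D1).
Qed.

Lemma duniq (f g : R -> dual) a b t l1 l2 : a < t < b ->
  (forall z, a < z < b -> f z = g z) ->
  dual_deriv_at f t l1 -> dual_deriv_at g t l2 -> l1 = l2.
Proof.
  intros Ht E [A1 A2] [B1 B2]. apply dual_eq.
  - apply (runiq (fun u => dre (f u)) (fun u => dre (g u)) a b t); auto.
    intros; rewrite E; auto.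
  - apply (runiq (fun u => ddu (f u)) (fun u => ddu (g u)) a b t); auto.
    intros; rewrite E; auto.
Qed.

Lemma vuniq (f g : R -> dvec) a b t l1 l2 : a < t < b ->
  (forall z, a < z < b -> f z = g z) ->
  vec_deriv_at f t l1 -> vec_deriv_at g t l2 -> l1 = l2.
Proof.
  intros Ht E [A1 [A2 A3]] [B1 [B2 B3]]. destruct l1 as [x1 x2 x3], l2 as [y1 y2 y3]; simpl in *.
  f_equal.
  - apply (duniq (fun u => Defs.c1 (f u)) (fun u => Defs.c1 (g u)) a b t); auto; intros; rewrite E; auto.
  - apply (duniq (fun u => c2 (f u)) (fun u => c2 (g u)) a b t); auto; intros; rewrite E; auto.
  - apply (duniq (fun u => c3 (f u)) (fun u => c3 (g u)) a b t); auto; intros; rewrite E; auto.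
Qed.

Lemma dlin (f g : R -> dual) (k : dual) t df dg :
  dual_deriv_at f t df -> dual_deriv_at g t dg ->
  dual_deriv_at (fun u => dadd (f u) (dmul k (g u))) t (dadd df (dmul k dg)).
Proof.
  intros [F1 F2] [G1 G2]; split; simpl.
  - apply derivable_pt_lim_plus; auto. apply derivable_pt_lim_scal; auto.
  - apply derivable_pt_lim_plus; auto. apply derivable_pt_lim_plus.
    + apply derivable_pt_lim_scal; auto.
    + apply derivable_pt_lim_scal; auto.
Qed.

Lemma vlin (X Y : R -> dvec) (k : dual) t DX DY :
  vec_deriv_at X t DX -> vec_deriv_at Y t DY ->
  vec_deriv_at (fun u => vadd (X u) (vscale k (Y u))) t (vadd DX (vscale k DY)).
Proof.
  intros [A1 [A2 A3]] [B1 [B2 B3]]; unfold vec_deriv_at; simpl.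
  split; [|split]; apply dlin; auto.
Qed.

Lemma Ls k X Z : linner (vscale k X) Z = dmul k (linner X Z).
Proof. destruct X, Z; unfold linner, vscale; simpl; ring. Qed.
Lemma La X Y Z : linner (vadd X Y) Z = dadd (linner X Z) (linner Y Z).
Proof. destruct X, Y, Z; unfold linner, vadd; simpl; ring. Qed.
Lemma Lsr k X Z : linner Z (vscale k X) = dmul k (linner Z X).
Proof. destruct X, Z; unfold linner, vscale; simpl; ring. Qed.
Lemma Lar X Y Z : linner Z (vadd X Y) = dadd (linner Z X) (linner Z Y).
Proof. destruct X, Y, Z; unfold linner, vadd; simpl; ring. Qed.
Lemma Lsym X Y : linner X Y = linner Y X.
Proof. destruct X, Y; unfold linner; simpl; ring. Qed.

Lemma vid w P Q X Z : vscale (dmul w Q) Z =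
  vadd (vscale w (vadd (vscale (dopp P) X) (vscale Q Z))) (vscale P (vscale w X)).
Proof. destruct X, Z; unfold vadd, vscale; simpl; f_equal; ring. Qed.

Lemma Dscale k m X Y Z : ddet (vscale k X) Y (vscale m Z) = dmul (dmul k m) (ddet X Y Z).
Proof. destruct X, Y, Z; unfold ddet, vscale; simpl; ring. Qed.

Lemma Dspec T N B v l P s :
  ddet (vadd (vscale v T) (vscale l (vscale s N))) B
       (vadd (vscale s N) (vscale P (vadd (vscale v T) (vscale l (vscale s N)))))
  = dmul (dopp (dmul v s)) (ddet T N B).
Proof. destruct T, N, B; unfold ddet, vscale, vadd; simpl; ring. Qed.

Lemma use (L R X : dual) : L = R -> X = dsub L R -> X = dzero.
Proof. intros G E; rewrite E, G; ring. Qed.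

Declare Scope dual_scope.
Delimit Scope dual_scope with D.
Notation "x + y" := (dadd x y) : dual_scope.
Notation "x * y" := (dmul x y) : dual_scope.
Notation "x - y" := (dsub x y) : dual_scope.
Notation "- x" := (dopp x) : dual_scope.

Lemma dm0 x : dmul x dzero = dzero. Proof. ring. Qed.
Lemma d0m x : dmul dzero x = dzero. Proof. ring. Qed.
Lemma dm1 x : dmul x done = x. Proof. ring. Qed.
Lemma da0 x : dadd x dzero = x. Proof. ring. Qed.
Lemma d0a x : dadd dzero x = x. Proof. ring. Qed.

Lemma unit_mul u x : dre u <> 0 -> (u * x = dzero)%D -> x = dzero.
Proof. apply dcancel. Qed.

Lemma algebra (w v ta l P Q d e a c : dual) :
  0 < dre w -> 0 < dre v ->
  (w*w - v*v*(l*l*ta*ta - done) = dzero)%D ->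
  (w*d + v = dzero)%D ->
  (w*e + l*(v*ta) = dzero)%D ->
  (v*a - l*(v*ta)*c = dzero)%D ->
  (w*(- P*d + Q*a) = dzero)%D ->
  (w*(- P*e + Q*c) + v*ta = dzero)%D ->
  (w*w*Q - v*v*ta = dzero)%D ->
  ta = dopp (ddiv P (dmul l Q)).
Proof.
  intros Hw Hv g1 g2 g3 g4 g5 g6 g7.
  assert (R1 : dre (w*w - v*v*(l*l*ta*ta - done))%D = 0) by (rewrite g1; reflexivity).
  assert (R7 : dre (w*w*Q - v*v*ta)%D = 0) by (rewrite g7; reflexivity).
  unfold dsub in R1, R7; simpl in R1, R7.
  assert (Hta : dre ta <> 0) by (intro H0; rewrite H0 in R1; nra).
  assert (Hl : dre l <> 0) by (intro H0; rewrite H0 in R1; nra).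
  assert (HQ : dre Q <> 0).
  { intro H0; rewrite H0 in R7. assert (dre v * dre v * dre ta = 0) by lra.
    assert (0 < dre v * dre v) by nra. destruct (Rmult_integral _ _ H); nra. }
  assert (h : (a - l*ta*c)%D = dzero).
  { apply (unit_mul v); [lra|]. rewrite <- g4; ring. }
  assert (i1 : (P*v + w*Q*l*ta*c)%D = dzero).
  { transitivity (w*(- P*d + Q*a) + P*(w*d + v) - w*Q*(a - l*ta*c))%D; [ring|].
    rewrite g5, g2, h; ring. }
  assert (i2 : (P*l*v*ta + w*Q*c + v*ta)%D = dzero).
  { transitivity (w*(- P*e + Q*c) + v*ta + P*(w*e + l*(v*ta)))%D; [ring|].
    rewrite g6, g3; ring. }
  assert (i3 : (P*l*w + v*c + w)%D = dzero).
  { apply (unit_mul (v*ta)%D). simpl. intro H0. apply Rmult_integral in H0; destruct H0; lra.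
    transitivity (w*(P*l*v*ta + w*Q*c + v*ta) - c*(w*w*Q - v*v*ta))%D; [ring|].
    rewrite i2, g7; ring. }
  assert (i4 : (P*w + v*ta*ta*l*c)%D = dzero).
  { apply (unit_mul v); [lra|].
    transitivity (w*(P*v + w*Q*l*ta*c) - l*ta*c*(w*w*Q - v*v*ta))%D; [ring|].
    rewrite i1, g7; ring. }
  assert (i5 : (P*(l*l*ta*ta - done) + ta*ta*l)%D = dzero).
  { apply (unit_mul w); [lra|].
    transitivity (l*ta*ta*(P*l*w + v*c + w) - (P*w + v*ta*ta*l*c))%D; [ring|].
    rewrite i3, i4; ring. }
  assert (i6 : (P + ta*l*Q)%D = dzero).
  { apply (unit_mul (w*w)%D). simpl. nra.
    transitivity (P*(w*w - v*v*(l*l*ta*ta - done)) + ta*l*(w*w*Q - v*v*ta)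
                  + v*v*(P*(l*l*ta*ta - done) + ta*ta*l))%D; [ring|].
    rewrite g1, g7, i5; ring. }
  assert (EP : P = (- (ta*l*Q))%D).
  { transitivity ((P + ta*l*Q) - ta*l*Q)%D; [ring|]. rewrite i6; ring. }
  rewrite EP. destruct ta as [t1 t2], l as [l1 l2], Q as [q1 q2]; simpl in *.
  apply dual_eq; unfold ddiv, dinv, dmul, dopp, dsub, dadd; simpl; field; auto.
Qed.

Theorem theorem3p3
  (a b : R) (alpha beta : R -> dvec)
  (v kappa tau : R -> dual) (T N B : R -> dvec)
  (w P Q : R -> dual) (V1 V2 V3 : R -> dvec) (lambda : dual) :
  a < b ->
  timelike_frenet alpha a b v kappa tau T N B ->
  spacelike_tb_frenet beta a b w P Q V1 V2 V3 ->
  lambda <> dzero ->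
  (forall t, a < t < b ->
     V2 t = B t /\ beta t = vadd (alpha t) (vscale lambda (B t))) ->
  forall t, a < t < b ->
    tau t = dopp (ddiv (P t) (dmul lambda (Q t))).
Proof.
  intros Hab HA HB Hl HM t Ht.
  destruct (HA t Ht) as [Hv [DA [DT [DN [DB [TT [NN [BB [TN [TB [NB DetA]]]]]]]]]]].
  destruct (HB t Ht) as [Hw [Dbe [DV1 [DV2 [DV3 [V11 [V22 [V33 [V12 [V13 [V23 DetB]]]]]]]]]]].
  destruct (HM t Ht) as [E2 E1].
  assert (D1 : vscale (w t) (V1 t) =
     vadd (vscale (v t) (T t)) (vscale lambda (vscale (dopp (dmul (v t) (tau t))) (N t)))).
  { apply (vuniq beta (fun u => vadd (alpha u) (vscale lambda (B u))) a b t); auto.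
    - intros z Hz; apply (HM z Hz).
    - apply vlin; auto. }
  assert (D2 : vscale (w t) (vadd (vscale (dopp (P t)) (V1 t)) (vscale (Q t) (V3 t)))
               = vscale (dopp (dmul (v t) (tau t))) (N t)).
  { apply (vuniq V2 B a b t); auto. intros z Hz; apply (HM z Hz). }
  assert (NT : linner (N t) (T t) = dzero) by (rewrite Lsym; auto).
  assert (BT : linner (B t) (T t) = dzero) by (rewrite Lsym; auto).
  assert (BN : linner (B t) (N t) = dzero) by (rewrite Lsym; auto).
  rewrite E2 in V12, V22, V23, DetB.
  assert (G1 := f_equal (fun X => linner X X) D1).
  assert (G2 := f_equal (fun X => linner X (T t)) D1).
  assert (G3 := f_equal (fun X => linner X (N t)) D1).
  assert (G4 := f_equal (fun X => linner X (V3 t)) D1).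
  assert (G5 := f_equal (fun X => linner X (T t)) D2).
  assert (G6 := f_equal (fun X => linner X (N t)) D2).
  simpl in G1, G2, G3, G4, G5, G6.
  repeat (rewrite ?La, ?Ls, ?Lar, ?Lsr in G1).
  repeat (rewrite ?La, ?Ls, ?Lar, ?Lsr in G2).
  repeat (rewrite ?La, ?Ls, ?Lar, ?Lsr in G3).
  repeat (rewrite ?La, ?Ls, ?Lar, ?Lsr in G4).
  repeat (rewrite ?La, ?Ls, ?Lar, ?Lsr in G5).
  repeat (rewrite ?La, ?Ls, ?Lar, ?Lsr in G6).
  rewrite ?TT, ?NN, ?TN, ?NT, ?V11 in G1. rewrite ?TT, ?NN, ?TN, ?NT in G2.
  rewrite ?TT, ?NN, ?TN, ?NT in G3. rewrite ?V13 in G4.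
  rewrite ?TT, ?NN, ?TN, ?NT in G5. rewrite ?TT, ?NN, ?TN, ?NT in G6.
  rewrite (Lsym (V3 t) (T t)) in G5. rewrite (Lsym (V3 t) (N t)) in G6.
  assert (DV := vid (w t) (P t) (Q t) (V1 t) (V3 t)).
  rewrite D2, D1 in DV.
  assert (G7 := f_equal (fun X => ddet (vscale (w t) (V1 t)) (B t) X) DV).
  simpl in G7. rewrite Dscale, DetB in G7. rewrite D1 in G7 at 1.
  rewrite Dspec, DetA in G7.
  repeat rewrite ?dm0, ?d0m, ?dm1, ?da0, ?d0a in G1.
  repeat rewrite ?dm0, ?d0m, ?dm1, ?da0, ?d0a in G2.
  repeat rewrite ?dm0, ?d0m, ?dm1, ?da0, ?d0a in G3.
  repeat rewrite ?dm0, ?d0m, ?dm1, ?da0, ?d0a in G4.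
  repeat rewrite ?dm0, ?d0m, ?dm1, ?da0, ?d0a in G5.
  repeat rewrite ?dm0, ?d0m, ?dm1, ?da0, ?d0a in G6.
  repeat rewrite ?dm0, ?d0m, ?dm1, ?da0, ?d0a in G7.
  apply (algebra (w t) (v t) (tau t) lambda (P t) (Q t)
           (linner (V1 t) (T t)) (linner (V1 t) (N t))
           (linner (T t) (V3 t)) (linner (N t) (V3 t))); auto. 
  all: first [ apply (use _ _ _ G1); ring_simplify; reflexivity
             | apply (use _ _ _ G2); ring_simplify; reflexivity
             | apply (use _ _ _ G3); ring_simplify; reflexivity
             | apply (use _ _ _ (eq_sym G4)); ring_simplify; reflexivity
             | apply (use _ _ _ G5); ring_simplify; reflexivity
             | apply (use _ _ _ G6); ring_simplify; reflexivity
             | apply (use _ _ _ G7); ring_simplify; reflexivity ].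
Qed.
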